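(* Let $\|\cdot\|$ be a strictly convex norm on $\mathbb{R}^n$ that is continuously differentiable on $\mathbb{R}^n\setminus\{0\}$, let $N(x)$ denote its gradient at $x\ne 0$, and set $h(x,y)=\|y\|-\langle y,N(x)\rangle$ for $x\neq0$, $y\in\mathbb{R}^n$. Suppose that there are constants $r>0$ and $\Lambda>2$ such that $$\Lambda\, h(x,x+y)\le h(x,x+2y)\quad\text{for all } x\neq 0 \text{ and } \|y\|\le r\|x\|.$$ Then $$\Big(3-\frac{2}{\Lambda}\Big)h(x,x+y)\le h(x,x+2y)\quad\text{for all } x\neq 0\text{ and }\|y\|\le 2r\|x\|.$$
   Context: $\langle\cdot,\cdot\rangle$ is the Euclidean inner product. Strict convexity of the norm means: if $x,y\neq0$ and $\|x+y\|=\|x\|+\|y\|$, then $y=\alpha x$ for some $\alpha>0$. *)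

(* Defs.v *)
From HB Require Import structures.
From mathcomp Require Import all_boot all_order all_algebra.
From mathcomp Require Import all_classical all_reals all_analysis.
Set Implicit Arguments. Unset Strict Implicit. Unset Printing Implicit Defensive.
Import Order.TTheory GRing.Theory Num.Theory.
Import numFieldNormedType.Exports.
Local Open Scope ring_scope.

Definition dotv {R : realType} {n : nat} (u v : 'rV[R]_n) : R :=
  \sum_(i < n) u 0 i * v 0 i.

Definition is_norm {R : realType} {n : nat} (nrm : 'rV[R]_n -> R) : Prop :=
  [/\ forall x, 0 <= nrm x,
      forall x, nrm x = 0 -> x = 0,
      forall (a : R) x, nrm (a *: x) = `|a| * nrm x
    & forall x y, nrm (x + y) <= nrm x + nrm y].

Definition strictly_convex_norm {R : realType} {n : nat} (nrm : 'rV[R]_n -> R) : Prop :=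
  forall x y : 'rV[R]_n, x != 0 -> y != 0 -> nrm (x + y) = nrm x + nrm y ->
    exists2 a : R, 0 < a & y = a *: x.

Definition C1_away_from_0_with_gradient {R : realType} {n : nat}
    (nrm : 'rV[R]_n -> R) (N : 'rV[R]_n -> 'rV[R]_n) : Prop :=
  forall x : 'rV[R]_n, x != 0 ->
    [/\ differentiable nrm x,
        (forall y, ('d nrm x : 'rV[R]_n -> R) y = dotv y (N x))
      & {for x, continuous N}].

Definition hfun {R : realType} {n : nat} (nrm : 'rV[R]_n -> R)
    (N : 'rV[R]_n -> 'rV[R]_n) (x y : 'rV[R]_n) : R :=
  nrm y - dotv y (N x).

(* Main.v *)
Require Import Defs.
From HB Require Import structures.
From mathcomp Require Import all_boot all_order all_algebra.
From mathcomp Require Import all_classical all_reals all_analysis.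
From mathcomp Require Import lra.
Import Order.TTheory GRing.Theory Num.Theory.
Import numFieldNormedType.Exports.
Local Open Scope ring_scope.

Lemma dotvD (R : realType) (n : nat) (u v w : 'rV[R]_n) :
  dotv (u + v) w = dotv u w + dotv v w.
Proof.
rewrite /dotv -big_split /=; apply: eq_bigr => i _; by rewrite mxE mulrDl.
Qed.

Lemma dotvZ (R : realType) (n : nat) (a : R) (u w : 'rV[R]_n) :
  dotv (a *: u) w = a * dotv u w.
Proof.
rewrite /dotv mulr_sumr; apply: eq_bigr => i _; by rewrite mxE mulrA.
Qed.

Theorem lemma4p4 (R : realType) (n : nat) (nrm : 'rV[R]_n -> R)
    (N : 'rV[R]_n -> 'rV[R]_n) (r Lambda : R) :
  is_norm nrm ->
  strictly_convex_norm nrm ->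
  C1_away_from_0_with_gradient nrm N ->
  0 < r -> 2 < Lambda ->
  (forall x y : 'rV[R]_n, x != 0 -> nrm y <= r * nrm x ->
     Lambda * hfun nrm N x (x + y) <= hfun nrm N x (x + 2 *: y)) ->
  forall x y : 'rV[R]_n, x != 0 -> nrm y <= 2 * r * nrm x ->
     (3 - 2 / Lambda) * hfun nrm N x (x + y) <= hfun nrm N x (x + 2 *: y).
Proof.
move=> [n0 _ nZ nT] _ _ r0 L2 H x y x0 hy.
set z := (2^-1) *: y.
have hz : nrm z <= r * nrm x.
  rewrite /z nZ ger0_norm ?invr_ge0 //. lra.
have Hz := H x z x0 hz.
have e2 : 2 *: z = y by rewrite /z scalerA divff ?scale1r // pnatr_eq0.
rewrite e2 in Hz.
have conv : 3 * nrm (x + y) <= nrm (x + 2 *: y) + 2 * nrm (x + z).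
  have -> : 3 * nrm (x + y) = nrm (3 *: (x + y)) by rewrite nZ ger0_norm.
  have -> : 2 * nrm (x + z) = nrm (2 *: (x + z)) by rewrite nZ ger0_norm.
  rewrite [2 *: (x + z)]scalerDr e2.
  have -> : 3 *: (x + y) = (x + 2 *: y) + (2 *: x + y).
    by apply/rowP => i; rewrite !mxE; lra.
  exact: nT.
have lin : dotv (x + 2 *: y) (N x) + 2 * dotv (x + z) (N x)
           = 3 * dotv (x + y) (N x).
  rewrite /z !dotvD !dotvZ.
  set p := dotv x (N x); set q := dotv y (N x).
  have h2 : (2 : R) * 2^-1 = 1 by rewrite divff // pnatr_eq0.
  rewrite mulrDr mulrA h2 mul1r.
  lra.
rewrite /hfun in Hz *.
rewrite -/z.
move: conv lin Hz.
move: (nrm (x + z)) (nrm (x + y)) (nrm (x + 2 *: y)) (dotv (x + z) (N x))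
  (dotv (x + y) (N x)) (dotv (x + 2 *: y) (N x)) => n1 n2 n3 d1 d2 d3 c1 c2 c3.
have L0 : 0 < Lambda by lra.
have ha : n1 - d1 <= (n2 - d2) / Lambda by rewrite ler_pdivlMr // mulrC.
have -> : (3 - 2 / Lambda) * (n2 - d2) = 3 * (n2 - d2) - 2 * ((n2 - d2) / Lambda).
  by rewrite mulrBl mulrAC mulrA.
lra.
Qed.
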